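(* Let $s,t,D\ge1$ be integers, let $\mathcal G=\{G_1,\dots,G_t\}$ be an $s$-joined graph family on $n$ vertices, and let $\mathcal H$ be a rooted $[t]$-edge-colored graph with $\Delta^{mon}(\mathcal H)\le D$ and $|V(\mathcal H)|\le n-2sD-3s$. Let $(w,r)\in V(\mathcal H)\times[t]$ with $\deg_{H_r}(w)<D$ and let $\mathcal H+wu$ be the extension of $\mathcal H$ with $w\overset{r}{\sim}u$. If $\phi:\mathcal H\hookrightarrow\mathcal G$ is a $(2s,D)$-good embedding, then there is a $(2s,D)$-good embedding $\phi':\mathcal H+wu\hookrightarrow\mathcal G$ extending $\phi$.
   Context: A graph family $\mathcal G=\{G_1,\dots,G_t\}$ is a collection of $t$ simple graphs on a common finite vertex set $V$, $n=|V|$. For $X\subseteq V\times[t]$, $\Gamma_{\mathcal G}(X)=\bigcup_{(v,i)\in X}\{u\in V:uv\in E(G_i)\}$. The family is $s$-joined if for all $X\subseteq V\times[t]$ and $Y\subseteq V$ with $|X|\ge s$ and $|Y|\ge s$ there exist $(v,i)\in X$ and $y\in Y$ with $vy\in E(G_i)$. A $[t]$-edge-colored graph $\mathcal H$ is a simple graph with each edge colored in $[t]$; $H_i$ is its spanning subgraph of color-$i$ edges, $\deg_{H_i}(h)$ the number of color-$i$ edges at $h$, and $\Delta^{mon}(\mathcal H)=\max_i\max_h\deg_{H_i}(h)$. An embedding $\phi:\mathcal H\hookrightarrow\mathcal G$ is an injective map $V(\mathcal H)\to V$ with $\phi(x)\phi(y)\in E(G_i)$ for every edge $xy$ of color $i$.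 A rooted $[t]$-edge-colored graph is one with a distinguished set of roots such that, after deleting all edges with both ends roots, every connected component is a tree containing exactly one root; for a non-root $h$ the unique path from $h$ to the root set (meeting it only at its last vertex) determines the parent of $h$ (its neighbour on the path) and $c(h)$, the color of the edge from $h$ to its parent. For fixed $D$: $P_\phi(\mathcal H)=\{(\phi(h),c(h)):h\text{ non-root}\}$ and, for $X\subseteq V\times[t]$, $R(X,\phi)=|\Gamma_{\mathcal G}(X)\setminus\phi(V(\mathcal H))|-\sum_{(v,i)\in X}[D-\deg_{H_i}(\phi^{-1}(v))]-|P_\phi(\mathcal H)\cap X|$, with $\deg_{H_i}(\phi^{-1}(v))=0$ if $v\notin\phi(V(\mathcal H))$. The embedding $\phi$ is $(s,D)$-good if $R(X,\phi)\ge0$ for every $X\subseteq V\times[t]$ with $|X|\le s$. For $w\in V(\mathcal H)$ and $r\in[t]$ with $\deg_{H_r}(w)<D$, the extension $\mathcal H+wu$ with $w\overset{r}{\sim}u$ is the rooted graph obtained by adding a new non-root vertex $u$ joined to $w$ by an edge of color $r$ (roots unchanged). An embedding extends $\phi$ if it agrees with $\phi$ on $V(\mathcal H)$. *)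

(* Defs.v *)
From HB Require Import structures.
From mathcomp Require Import all_boot all_order all_algebra.
From mathcomp Require Import boolp.
Set Implicit Arguments. Unset Strict Implicit. Unset Printing Implicit Defensive.
Import GRing.Theory Num.Theory.

(* A graph family {G_1,...,G_t} is G : 'I_t -> rel V ; simplicity (symmetric,
   irreflexive) is imposed as hypotheses in the theorem. *)

Definition simple_family (V : finType) (t : nat) (G : 'I_t -> rel V) : Prop :=
  forall i, symmetric (G i) /\ irreflexive (G i).

Definition Gamma (V : finType) (t : nat) (G : 'I_t -> rel V)
  (X : {set V * 'I_t}) : {set V} :=
  [set u | [exists x in X, G x.2 x.1 u]].

Definition s_joined (V : finType) (t : nat) (G : 'I_t -> rel V) (s : nat) : Prop :=
  forall (X : {set V * 'I_t}) (Y : {set V}), s <= #|X| -> s <= #|Y| ->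
    exists x, exists y, [/\ x \in X, y \in Y & G x.2 x.1 y].

(* col x y = Some i iff xy is an edge of colour i; None iff no edge. *)
Record cgraph (t : nat) (T : finType) := CGraph {
  col : T -> T -> option 'I_t;
  col_sym : forall x y, col x y = col y x;
  col_irr : forall x, col x x = None }.

Definition deg t (T : finType) (H : cgraph t T) (i : 'I_t) (h : T) : nat :=
  #|[set y | col H h y == Some i]|.

Definition maxmondeg_le t (T : finType) (H : cgraph t T) (D : nat) : Prop :=
  forall i h, deg H i h <= D.

Record rcgraph (t : nat) (T : finType) := RCGraph {
  rg :> cgraph t T;
  roots : {set T} }.

Definition redge t (T : finType) (H : rcgraph t T) : rel T :=
  fun x y => (col H x y != None) && ~~ ((x \in roots H) && (y \in roots H)).

Definition is_rooted t (T : finType) (H : rcgraph t T) : Prop :=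
  (forall c : seq T, ~ (ucycle (redge H) c /\ 2 < size c)) /\
  (forall h : T, #|[set r in roots H | connect (redge H) h r]| = 1).

Definition root_path t (T : finType) (H : rcgraph t T) (h : T) (p : seq T) : Prop :=
  [/\ path (redge H) h p, uniq (h :: p), p != [::],
      last h p \in roots H & all (fun y => y \notin roots H) (belast h p)].

Definition is_parent t (T : finType) (H : rcgraph t T) (h x : T) : bool :=
  `[< exists p, root_path H h (x :: p) >].

Definition embedding (V : finType) t (G : 'I_t -> rel V) (T : finType)
  (H : cgraph t T) (phi : T -> V) : Prop :=
  injective phi /\ forall x y i, col H x y = Some i -> G i (phi x) (phi y).

Definition Pphi (V : finType) t (T : finType) (H : rcgraph t T) (phi : T -> V)
  : {set V * 'I_t} :=
  [set z | [exists h, [exists x, [&& h \notin roots H, is_parent H h x,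
                                     phi h == z.1 & col H h x == Some z.2]]]].

(* deg_{H_i}(phi^{-1}(v)), and 0 if v is not in the image *)
Definition degpre (V : finType) t (T : finType) (H : cgraph t T) (phi : T -> V)
  (i : 'I_t) (v : V) : nat :=
  if [pick h | phi h == v] is Some h then deg H i h else 0.

Definition image_set (V : finType) (T : finType) (phi : T -> V) : {set V} :=
  [set phi h | h : T].

Definition Rval (V : finType) t (G : 'I_t -> rel V) (T : finType)
  (H : rcgraph t T) (phi : T -> V) (D : nat) (X : {set V * 'I_t}) : int :=
  (#|Gamma G X :\: image_set phi|%:Z
   - (\sum_(x in X) ((D%:Z) - (degpre H phi x.2 x.1)%:Z))
   - #|Pphi H phi :&: X|%:Z)%R.

Definition good (V : finType) t (G : 'I_t -> rel V) (T : finType)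
  (H : rcgraph t T) (phi : T -> V) (s D : nat) : Prop :=
  forall X : {set V * 'I_t}, #|X| <= s -> (0 <= Rval G H phi D X)%R.

(* vertices option T; the new vertex u is None *)
Definition ext_col t (T : finType) (H : cgraph t T) (w : T) (r : 'I_t)
  (x y : option T) : option 'I_t :=
  match x, y with
  | Some a, Some b => col H a b
  | None, Some b => if b == w then Some r else None
  | Some a, None => if a == w then Some r else None
  | None, None => None
  end.

Lemma ext_col_sym t (T : finType) (H : cgraph t T) w r x y :
  ext_col H w r x y = ext_col H w r y x.
Proof. by case: x; case: y => //= a b; rewrite col_sym. Qed.

Lemma ext_col_irr t (T : finType) (H : cgraph t T) w r x :
  ext_col H w r x x = None.
Proof. by case: x => //= a; rewrite col_irr. Qed.

Definition ext t (T : finType) (H : rcgraph t T) (w : T) (r : 'I_t)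
  : rcgraph t (option T) :=
  RCGraph (CGraph (@ext_col_sym t T H w r) (@ext_col_irr t T H w r))
         [set Some x | x in roots H].

(* Main.v *)
Require Import Defs.
From mathcomp Require Import all_boot all_order all_algebra.
From mathcomp Require boolp.
From mathcomp Require Import zify.
Set Implicit Arguments. Unset Strict Implicit. Unset Printing Implicit Defensive.
Import Order.TTheory GRing.Theory Num.Theory.

Lemma gammaU (V : finType) t (G : 'I_t -> rel V) X Y :
  Gamma G (X :|: Y) = Gamma G X :|: Gamma G Y.
Proof.
apply/setP=> u; rewrite !inE; apply/existsP/orP.
  by case=> x /andP[]; rewrite inE => /orP[] hx hg; [left|right];
     apply/existsP; exists x; rewrite hx.
by case=> /existsP[x /andP[hx hg]]; exists x; rewrite inE hx ?orbT.
Qed.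

Lemma gamma_sub (V : finType) t (G : 'I_t -> rel V) (X Y : {set V * 'I_t}) :
  X \subset Y -> Gamma G X \subset Gamma G Y.
Proof.
move=> sXY; apply/subsetP=> u; rewrite !inE => /existsP[x /andP[hx hg]].
by apply/existsP; exists x; rewrite (subsetP sXY _ hx).
Qed.

Lemma gamma1 (V : finType) t (G : 'I_t -> rel V) a :
  Gamma G [set a] = [set u | G a.2 a.1 u].
Proof.
apply/setP=> u; rewrite !inE; apply/existsP/idP.
  by case=> x /andP[]; rewrite inE => /eqP->.
by move=> h; exists a; rewrite inE eqxx.
Qed.

Lemma gamma0 (V : finType) t (G : 'I_t -> rel V) : Gamma G set0 = set0.
Proof.
by apply/setP=> u; rewrite !inE; apply/existsP; case=> x; rewrite inE.
Qed.

Lemma sumUI (T : finType) (f : T -> int) (A B : {set T}) :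
  (\sum_(x in A :|: B) f x + \sum_(x in A :&: B) f x =
   \sum_(x in A) f x + \sum_(x in B) f x)%R.
Proof.
rewrite [in LHS](big_mkcond (fun x => x \in A :|: B)) /=.
rewrite [X in (_ + X)%R](big_mkcond (fun x => x \in A :&: B)) /=.
rewrite [X in _ = (X + _)%R](big_mkcond (fun x => x \in A)) /=.
rewrite [X in _ = (_ + X)%R](big_mkcond (fun x => x \in B)) /=.
rewrite -!big_split /=; apply: eq_bigr => x _; rewrite !inE.
by case: (x \in A); case: (x \in B); rewrite ?addr0 ?add0r.
Qed.

Lemma arith4 (a1 a2 a3 a4 c1 c2 c3 c4 : nat) (s1 s2 s3 s4 : int) :
  a1 + a2 <= a3 + a4 -> c1 + c2 = c3 + c4 -> (s1 + s2 = s3 + s4)%R ->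
  (a1%:Z - s1 - c1%:Z + (a2%:Z - s2 - c2%:Z) <=
   a3%:Z - s3 - c3%:Z + (a4%:Z - s4 - c4%:Z))%R.
Proof. lia. Qed.

Lemma Rval_submod (V : finType) t (G : 'I_t -> rel V) (T : finType)
  (H : rcgraph t T) (phi : T -> V) (D : nat) (X Y : {set V * 'I_t}) :
  (Rval G H phi D (X :|: Y) + Rval G H phi D (X :&: Y) <=
   Rval G H phi D X + Rval G H phi D Y)%R.
Proof.
rewrite /Rval.
set I := image_set phi.
have hA : #|Gamma G (X :|: Y) :\: I| + #|Gamma G (X :&: Y) :\: I| <=
          #|Gamma G X :\: I| + #|Gamma G Y :\: I|.
  rewrite gammaU setDUl -[#|Gamma G X :\: I| + _]cardsUI leq_add2l subset_leq_card //.
  have /subsetP s1 := gamma_sub G (subsetIl X Y).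
  have /subsetP s2 := gamma_sub G (subsetIr X Y).
  apply/subsetP=> u; rewrite !in_setD in_setI !in_setD => /andP[hu hg].
  by rewrite hu s1 ?s2.
have hP : #|Pphi H phi :&: (X :|: Y)| + #|Pphi H phi :&: (X :&: Y)| =
          #|Pphi H phi :&: X| + #|Pphi H phi :&: Y|.
  by rewrite setIUr -[RHS]cardsUI setIACA setIid.
have hS := sumUI (fun x : V * 'I_t => (D%:Z - (degpre H phi x.2 x.1)%:Z)%R) X Y.
exact: arith4.
Qed.

Lemma sum_le_D (V : finType) t (T : finType) (H : rcgraph t T) (phi : T -> V)
  (D : nat) (X : {set V * 'I_t}) :
  (\sum_(x in X) (D%:Z - (degpre H phi x.2 x.1)%:Z) <= (#|X| * D)%:Z)%R.
Proof.
apply: (@le_trans _ _ (\sum_(x in X) (D%:Z))%R).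
  by apply: ler_sum => x _; rewrite lerBlDr lerDl.
by rewrite sumr_const -mulr_natr natz -PoszM mulnC.
Qed.

Lemma image_card (V T : finType) (phi : T -> V) : #|image_set phi| <= #|T|.
Proof. exact: leq_imset_card. Qed.

Lemma Rval_big (V : finType) t (G : 'I_t -> rel V) (T : finType)
  (H : rcgraph t T) (phi : T -> V) (D s : nat) (X : {set V * 'I_t}) :
  s_joined G s -> #|T| + 2 * s * D + 3 * s <= #|V| ->
  s <= #|X| -> #|X| <= 2 * s -> (0 < Rval G H phi D X)%R.
Proof.
move=> sj hV hs1 hs2.
have hc : #|~: Gamma G X| < s.
  rewrite ltnNge; apply/negP => hs.
  have [x [y [hx hy hg]]] := sj X _ hs1 hs.
  move: hy; rewrite inE => /negP; apply; rewrite inE.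
  by apply/existsP; exists x; rewrite hx.
have hC := cardsC (Gamma G X).
have hID := cardsID (image_set phi) (Gamma G X).
have hI : #|Gamma G X :&: image_set phi| <= #|T|.
  exact: leq_trans (subset_leq_card (subsetIr _ _)) (image_card phi).
have hS := sum_le_D H phi D X.
have hP : #|Pphi H phi :&: X| <= #|X| by apply: subset_leq_card; apply: subsetIr.
have hM : #|X| * D <= 2 * s * D by rewrite leq_mul2r hs2 orbT.
rewrite /Rval. lia.
Qed.

Lemma card_opt (T : finType) (P : pred (option T)) :
  #|[set z | P z]| = P None + #|[set x | P (Some x)]|.
Proof.
rewrite (cardsD1 None) inE; congr (_ + _).
have -> : [set z | P z] :\ None = Some @: [set x | P (Some x)].
  apply/setP => z; case: z => [a|]; rewrite !inE.
    by rewrite mem_imset ?inE //; move=> ? ? [].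
  by apply/esym/imsetP; case.
by rewrite card_imset //; move=> ? ? [].
Qed.

Lemma deg_ext_some t (T : finType) (H : rcgraph t T) w r i h :
  deg (ext H w r) i (Some h) = deg H i h + ((h == w) && (r == i)).
Proof.
rewrite /deg /= card_opt /= addnC; congr (_ + _).
by case: (h == w); rewrite //= inj_eq //; move=> ? ? [].
Qed.

Lemma deg_ext_none t (T : finType) (H : rcgraph t T) w r i :
  deg (ext H w r) i None = (r == i).
Proof.
rewrite /deg /= card_opt /=.
case: (eqVneq r i) => [<-|ne].
  have -> : [set x | (if x == w then Some r else None) == Some r] = [set w].
    by apply/setP => x; rewrite !inE; case: (x == w); rewrite ?eqxx.
  by rewrite cards1.
have -> : [set x | (if x == w then Some r else None) == Some i] = set0.
  apply/setP => x; rewrite !inE; case: (x == w) => //; rewrite inj_eq; [exact: negbTE | by move=> ? ? []].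
by rewrite cards0.
Qed.

Lemma notin_img (V T : finType) (phi : T -> V) y h :
  y \notin image_set phi -> (phi h == y) = false.
Proof.
move=> hy; apply/negbTE/eqP => e; move/negP: hy; apply; rewrite -e.
exact: imset_f.
Qed.

Lemma degpre_ext t (V T : finType) (H : rcgraph t T) (phi : T -> V) w r y i v :
  injective phi -> y \notin image_set phi ->
  degpre (ext H w r) (fun o => if o is Some x then phi x else y) i v =
  degpre H phi i v + ((v == phi w) && (i == r)) + ((v == y) && (i == r)).
Proof.
move=> inj hy; have yn := notin_img _ hy.
rewrite /degpre; case: pickP => [o /eqP ho | ho]; case: pickP => [h /eqP hh | hh].
- case: o ho => [a|] ho.
    have ea : a = h by apply: inj; rewrite ho hh.
    by subst a v; rewrite deg_ext_some (inj_eq inj) yn (eq_sym i) addn0 /=.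
  by move: (yn h); rewrite hh ho eqxx.
- case: o ho => [a|] ho; first by move: (hh a); rewrite ho eqxx.
  subst v; rewrite deg_ext_none eqxx (eq_sym y) yn eq_sym /=; lia.
- by move: (ho (Some h)); rewrite /= hh eqxx.
- move: (ho (Some w)) (ho None) => /= h1 h2.
  by rewrite (eq_sym v) h1 (eq_sym v) h2.
Qed.

Lemma Some_inj' (T : Type) : injective (@Some T).
Proof. by move=> ? ? []. Qed.

Lemma ext_roots_some t (T : finType) (H : rcgraph t T) w r a :
  (Some a \in Defs.roots (ext H w r)) = (a \in Defs.roots H).
Proof. by rewrite /= mem_imset //; apply: Some_inj'. Qed.

Lemma ext_roots_none t (T : finType) (H : rcgraph t T) w r :
  (None \in Defs.roots (ext H w r)) = false.
Proof. by apply/negbTE/imsetP; case. Qed.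

Lemma redge_ext_some t (T : finType) (H : rcgraph t T) w r a b :
  redge (ext H w r) (Some a) (Some b) = redge H a b.
Proof. by rewrite /redge !ext_roots_some. Qed.

Lemma redge_ext_none_r t (T : finType) (H : rcgraph t T) w r a :
  redge (ext H w r) a None -> a = Some w.
Proof.
rewrite /redge /=; case: a => [a|] //=.
by case: (eqVneq a w) => [-> _|].
Qed.

Lemma redge_ext_none_l t (T : finType) (H : rcgraph t T) w r b :
  redge (ext H w r) None b -> b = Some w.
Proof.
rewrite /redge /=; case: b => [b|] //=.
by case: (eqVneq b w) => [-> _|].
Qed.

Lemma nonone_path t (T : finType) (H : rcgraph t T) w r h q :
  root_path (ext H w r) (Some h) q -> None \notin q.
Proof.
case=> hp hu hne hl hall; apply/negP => hin.
case/splitPr: hin hp hu hne hl hall => q1 q2 hp hu hne hl hall.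
clear hall hne.
move: hp; rewrite cat_path /= => /and3P[_ e1 p2].
have lw := redge_ext_none_r e1.
case: q2 p2 hl hu => [|b q2] p2 hl hu.
  by move: hl; rewrite last_cat /= ext_roots_none.
move: p2 => /= /andP[e2 _]; have bw := redge_ext_none_l e2; subst b.
move: hu; rewrite -cat_cons cat_uniq => /and3P[_ /negP hh _]; apply: hh.
apply/hasP; exists (Some w); first by rewrite !inE eqxx orbT.
by rewrite -lw mem_last.
Qed.

Lemma lift_seq (T : eqType) (q : seq (option T)) :
  None \notin q -> exists q0, q = map Some q0.
Proof.
elim: q => [|a q IH]; first by exists [::].
rewrite inE negb_or => /andP[ha /IH[q0 ->]].
by case: a ha => [a|] //; exists (a :: q0).
Qed.

Lemma root_path_ext t (T : finType) (H : rcgraph t T) w r h q0 :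
  root_path (ext H w r) (Some h) (map Some q0) -> root_path H h q0.
Proof.
case=> hp hu hne hl hall; split.
- move: hp; rewrite path_map (@eq_path _ _ (redge H)) //.
  move=> a b /=; exact: redge_ext_some.
- by move: hu; rewrite -(map_cons Some) (map_inj_uniq (@Some_inj' _)).
- by case: q0 hne {hp hu hl hall}.
- by move: hl; rewrite last_map ext_roots_some.
- move: hall; rewrite belast_map all_map; apply: sub_all => a /=.
  by rewrite ext_roots_some.
Qed.

Lemma Pphi_ext t (V T : finType) (H : rcgraph t T) (phi : T -> V) w r y :
  Pphi (ext H w r) (fun o => if o is Some x then phi x else y)
  \subset (y, r) |: Pphi H phi.
Proof.
apply/subsetP => z; rewrite inE => /existsP[o /existsP[x /and4P[hro hpar hphi hcol]]].
case: o hro hpar hphi hcol => [h|] hro hpar hphi hcol.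
  move/boolp.asboolP: hpar => [p hp].
  have /lift_seq[[|x0 p0] e] := nonone_path hp; first by [].
  case: e => ex ep; subst x p.
  have hp0 := @root_path_ext _ _ H w r h (x0 :: p0) hp.
  rewrite !inE; apply/orP; right; apply/existsP; exists h; apply/existsP; exists x0.
  rewrite -(ext_roots_some H w r) hro hphi /=.
  rewrite hcol andbT; apply/boolp.asboolP; by exists p0.
rewrite !inE; apply/orP; left.
case: z hphi hcol => z1 z2 /= /eqP <-.
clear hpar; case: x => [b|] //=; case: (b == w) => //= /eqP[<-].
by rewrite eqxx.
Qed.

Lemma degpre_img t (V T : finType) (H : cgraph t T) (phi : T -> V) i h :
  injective phi -> degpre H phi i (phi h) = deg H i h.
Proof.
move=> inj; rewrite /degpre; case: pickP => [h' /eqP e|n].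
  by rewrite (inj _ _ e).
by move: (n h); rewrite eqxx.
Qed.

Lemma sum_drop (I : finType) (A : {set I}) (f g : I -> int) a :
  (forall x, f x <= g x)%R -> (f a + 1 <= g a)%R ->
  (\sum_(x in A) f x + (a \in A)%:Z <= \sum_(x in A) g x)%R.
Proof.
move=> hfg ha; case hA: (a \in A).
  rewrite (bigD1 a) //= [X in (_ <= X)%R](bigD1 a) //=.
  have hs : (\sum_(x in A | x != a) f x <= \sum_(x in A | x != a) g x)%R.
    by apply: ler_sum => x _; apply: hfg.
  by rewrite -addrA (addrC _ 1%R) addrA; apply: lerD.
by rewrite addr0; apply: ler_sum => x _; apply: hfg.
Qed.

Lemma card_set1I (I : finType) (a : I) (X : {set I}) :
  #|[set a] :&: X| <= (a \in X).
Proof.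
case h: (a \in X).
  by rewrite (setIidPl _) ?sub1set // cards1.
rewrite (_ : _ :&: _ = set0) ?cards0 //.
by apply/setP=> z; rewrite !inE; case: eqP => // ->; rewrite h.
Qed.
Unset Implicit Arguments. Set Strict Implicit. Set Printing Implicit Defensive.

Lemma arith5 (a a' c c' dg Dn : nat) (S : int) : a' <= a -> c <= c' -> dg < Dn ->
  (0 <= a'%:Z - (Dn%:Z - dg%:Z + S) - c'%:Z)%R -> (a%:Z - S - c%:Z = 0)%R -> False.
Proof. lia. Qed.

Lemma ar1 (D d : nat) (b1 b2 : bool) :
  (D%:Z - (d + b1 + b2)%:Z <= D%:Z - d%:Z - b2%:Z)%R.
Proof. case: b1; case: b2 => /=; lia. Qed.
Lemma ar2 (D d : nat) (b : bool) :
  (D%:Z - (d + true + b)%:Z + 1 <= D%:Z - d%:Z - b%:Z)%R.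
Proof. case: b => /=; lia. Qed.
Lemma ar3 (D d : nat) (b : bool) : (D%:Z - d%:Z - b%:Z <= D%:Z - d%:Z)%R.
Proof. case: b => /=; lia. Qed.
Lemma ar4 (D d : nat) : (D%:Z - d%:Z - true%:Z + 1 <= D%:Z - d%:Z)%R.
Proof. rewrite /=; lia. Qed.
Lemma arith6 (a a' c c' : nat) (S S1 S' : int) (b1 b2 b3 : bool) :
  a <= a' + b1 -> (S' + b2%:Z <= S1)%R -> (S1 + b3%:Z <= S)%R ->
  c' <= c + b3 -> (0 <= a%:Z - S - c%:Z)%R ->
  (b1 -> ~~ b2 -> 0 < a%:Z - S - c%:Z)%R -> (0 <= a'%:Z - S' - c'%:Z)%R.
Proof. case: b1; case: b2; case: b3 => /=; try lia; move=> ? ? ? ? ? /(_ isT isT); lia. Qed.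

Theorem lemma2p8 (s t D : nat) (V : finType) (G : 'I_t -> rel V)
  (T : finType) (H : rcgraph t T) (w : T) (r : 'I_t) (phi : T -> V) :
  1 <= s -> 1 <= t -> 1 <= D ->
  simple_family G -> s_joined G s ->
  is_rooted H -> maxmondeg_le H D ->
  #|T| + 2 * s * D + 3 * s <= #|V| ->
  deg H r w < D ->
  embedding G H phi -> good G H phi (2 * s) D ->
  exists phi' : option T -> V,
    [/\ embedding G (ext H w r) phi',
        (forall x, phi' (Some x) = phi x) &
        good G (ext H w r) phi' (2 * s) D].
Proof.
move=> s1 t1 D1 sf sj hr hmd hV hdeg [inj hemb] hgood.
pose p := (phi w, r).
have small : forall X : {set V * 'I_t}, #|X| <= 2 * s -> Rval G H phi D X = 0%R -> #|X| < s.
  move=> X h2 h0; rewrite ltnNge; apply/negP => h1.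
  by have := Rval_big H phi sj hV h1 h2; rewrite h0 ltxx.
pose tight (X : {set V * 'I_t}) := [&& #|X| < s, Rval G H phi D X == 0%R & p \notin X].
have t0 : tight set0.
  rewrite /tight cards0 s1 inE /= /Rval gamma0 set0D cards0 big_set0 setI0 cards0.
  by [].
have [Xs tXs maxXs] := @arg_maxnP _ set0 tight (fun X => #|X|) t0.
move: tXs => /and3P[hXs_s /eqP hXs0 hpXs].
have closed : forall X : {set V * 'I_t}, #|X| <= 2 * s -> Rval G H phi D X = 0%R -> p \notin X ->
    X \subset Xs.
  move=> X h2 h0 hp.
  have hXlt := small X h2 h0.
  have hU : #|X :|: Xs| <= 2 * s.
    have := cardsU X Xs; have := subset_leq_card (subsetIr X Xs); lia.
  have hI : #|X :&: Xs| <= 2 * s.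
    have := subset_leq_card (subsetIr X Xs); lia.
  have sub := Rval_submod G H phi D X Xs.
  have n1 := hgood _ hU; have n2 := hgood _ hI.
  have e0 : Rval G H phi D (X :|: Xs) = 0%R.
    move: sub n1 n2; rewrite h0 hXs0; lia.
  have tU : tight (X :|: Xs).
    by rewrite /tight (small _ hU e0) e0 eqxx inE negb_or hp hpXs.
  have hle := maxXs _ tU.
  have /eqP -> : Xs == X :|: Xs by rewrite eqEcard subsetUr; exact: hle.
  exact: subsetUl.
have [y /and3P[hyG hyI hyX]] :
    exists y, [&& G r (phi w) y, y \notin image_set phi & y \notin Gamma G Xs].
  case: (boolP [exists y, [&& G r (phi w) y, y \notin image_set phi &
                               y \notin Gamma G Xs]]) => [/existsP//|/existsPn hn].
  exfalso.
  have hX' : #|p |: Xs| <= 2 * s.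
    by rewrite cardsU1 hpXs add1n; apply: (leq_trans hXs_s); rewrite mul2n -addnn leq_addr.
  have n1 := hgood _ hX'.
  have ha : #|Gamma G (p |: Xs) :\: image_set phi| <= #|Gamma G Xs :\: image_set phi|.
    apply: subset_leq_card; apply/subsetP => u.
    rewrite gammaU gamma1 !in_setD in_setU inE /= => /andP[hu /orP[hg|->]];
      last by rewrite hu.
    by move: (hn u); rewrite hg hu /= negbK => ->.
  have hc : #|Pphi H phi :&: Xs| <= #|Pphi H phi :&: (p |: Xs)|.
    by apply: subset_leq_card; apply: setIS; apply: subsetUr.
  have hd := degpre_img (rg H) r w inj.
  move: n1 hXs0; rewrite /Rval big_setU1 //= hd.
  set S := (\sum_(x in Xs) _)%R.
  move: ha hc hdeg; exact: arith5.
pose phi' : option T -> V := fun o => if o is Some x then phi x else y.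
have yn := notin_img w hyI.
have yn' : forall h, (phi h == y) = false by move=> h; exact: notin_img.
exists phi'; split => //.
  split.
    case=> [a|] [b|] //= e; first by rewrite (inj _ _ e).
      by move: (yn' a); rewrite e eqxx.
    by move: (yn' b); rewrite -e eqxx.
  case=> [a|] [b|] i //=.
  - exact: hemb.
  - by case: (eqVneq a w) => [-> [<-]|].
  - case: (eqVneq b w) => [-> [<-]|] //.
    by have -> := (sf r).1 y (phi w).
move=> X hX.
have ha : #|Gamma G X :\: image_set phi| <=
          #|Gamma G X :\: image_set phi'| + (y \in Gamma G X).
  have claim : forall u, u \notin image_set phi -> u != y -> u \notin image_set phi'.
    move=> u hu hne; apply/negP; rewrite /image_set => /imsetP[[h|] _ /= e].
      by move/negP: hu; apply; rewrite e; exact: imset_f.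
    by move/eqP: hne.
  case hyG' : (y \in Gamma G X).
    apply: (@leq_trans #|y |: (Gamma G X :\: image_set phi')|).
      apply: subset_leq_card; apply/subsetP => u; rewrite in_setU1 !in_setD.
      case: (eqVneq u y) => //= hne /andP[hu ->]; rewrite andbT; exact: claim.
    by rewrite cardsU1 addnC leq_add2l; case: (_ \notin _).
  rewrite addn0; apply: subset_leq_card; apply/subsetP => u; rewrite !in_setD.
  move=> /andP[hu hg]; rewrite hg andbT claim //.
  by apply/eqP => e; move: hg; rewrite e hyG'.
have hpt : forall x : V * 'I_t, degpre (ext H w r) phi' x.2 x.1 =
    degpre H phi x.2 x.1 + (x == p) + (x == (y, r)).
  by case=> v i; rewrite degpre_ext // /p !xpair_eqE.
have sd1 := @sum_drop _ X
  (fun x => D%:Z - (degpre (ext H w r) phi' x.2 x.1)%:Z)%R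
  (fun x => D%:Z - (degpre H phi x.2 x.1)%:Z - (x == (y, r))%:Z)%R p _ _.
have sd2 := @sum_drop _ X
  (fun x => D%:Z - (degpre H phi x.2 x.1)%:Z - (x == (y, r))%:Z)%R
  (fun x => D%:Z - (degpre H phi x.2 x.1)%:Z)%R (y, r) _ _.
have hc : #|Pphi (ext H w r) phi' :&: X| <= #|Pphi H phi :&: X| + ((y, r) \in X).
  apply: leq_trans (subset_leq_card (setSI X (Pphi_ext H phi w r y))) _.
  rewrite setIUl cardsU; apply: leq_trans (leq_subr _ _) _.
  rewrite addnC leq_add2l; exact: card_set1I.
have hd := hgood X hX.
have he : y \in Gamma G X -> p \notin X -> (0 < Rval G H phi D X)%R.
  move=> hyG' hpX; rewrite lt_neqAle hd andbT eq_sym; apply/negP => /eqP h0.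
  have sub := closed X hX h0 hpX.
  by move/negP: hyX; apply; exact: (subsetP (gamma_sub G sub)).
have hpyr : (p == (y, r)) = false by rewrite /p xpair_eqE yn'.
have {sd1} sd1 := sd1 (fun x => ltac:(rewrite hpt; exact: ar1)) ltac:(rewrite hpt eqxx hpyr; exact: ar2).
have {sd2} sd2 := sd2 (fun x => ar3 _ _ _) ltac:(rewrite eqxx; exact: ar4).
exact: (arith6 _ _ _ _ _ _ _ _ _ _ ha sd1 sd2 hc hd he).
Qed.
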